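(* Let $(\mathcal M,P_1,P_2)$ be a bi-Hamiltonian manifold, let $\mathcal S$ be a symplectic leaf of $P_1$, let $D=P_2(\ker P_1)$ and $E=D\cap T\mathcal S$, and let $\mathcal Q\subset\mathcal S$ be a submanifold transversal to $E$, i.e. $T_{\mathbf w}\mathcal Q\oplus E_{\mathbf w}=T_{\mathbf w}\mathcal S$ for all $\mathbf w\in\mathcal Q$. Choose coordinates on $\mathcal M$ adapted to $\mathcal Q$ (the first group of coordinates restricts to coordinates on $\mathcal Q$, and $\mathcal Q$ is given by the vanishing of the second group), and write the matrix of the Poisson pencil $P_{(\lambda)}=P_2-\lambda P_1$ in block form $$P_{(\lambda)}=\begin{pmatrix}A_{(\lambda)}&B_{(\lambda)}\\ C_{(\lambda)}&D_{(\lambda)}\end{pmatrix}.$$ Suppose that $(\ker P_1)_{\mathbf w}\cap(\ker P_2)_{\mathbf w}=\{0\}$ for all $\mathbf w\in\mathcal Q$. Then: (a) the matrix $D_{(\lambda)}$ is invertible; (b) the matrix representing the reduced Poisson pencil $P'_{(\lambda)}$ on $\mathcal Q$ is $A_{(\lambda)}-B_{(\lambda)}D_{(\lambda)}^{-1}C_{(\lambda)}$; (c) the identity $$P_{(\lambda)}=\begin{pmatrix}P'_{(\lambda)}&B_{(\lambda)}\\0&D_{(\lambda)}\end{pmatrix}\begin{pmatrix}\mathrm{Id}&0\\ D_{(\lambda)}^{-1}C_{(\lambda)}&\mathrm{Id}\end{pmatrix}$$ holds, where $\mathrm{Id}$ denotes identity matrices of the appropriate sizes.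
   Context: For a Poisson tensor $P_a$, the bracket is $\{F,G\}_a=\langle dG,P_a dF\rangle$. The reduced Poisson pencil on the transversal submanifold $\mathcal Q$ is defined as follows: given $\mathbf w\in\mathcal Q$ and $\mathbf v\in T^*_{\mathbf w}\mathcal Q$, one takes an extension $\widehat{\mathbf v}\in T^*_{\mathbf w}\mathcal M$ of $\mathbf v$ such that $(P_{(\lambda)})_{\mathbf w}\widehat{\mathbf v}\in T_{\mathbf w}\mathcal Q$ (such an extension exists), and sets $(P'_{(\lambda)})_{\mathbf w}\mathbf v=(P_{(\lambda)})_{\mathbf w}\widehat{\mathbf v}$. Equivalently, the reduced brackets are $\{f,g\}'_a(\mathbf w)=\{F,G\}_a(\mathbf w)$ for $\mathbf w\in\mathcal Q$, where $F,G$ are extensions of $f,g$ to $\mathcal M$ whose differentials vanish on $D_{\mathbf w}$ for all $\mathbf w\in\mathcal Q$. Geometric objects and the matrices representing them in the chosen coordinates are denoted by the same symbols. *)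

(* Defs.v *)
From HB Require Import structures.
From mathcomp Require Import all_boot all_order all_algebra.
Set Implicit Arguments. Unset Strict Implicit. Unset Printing Implicit Defensive.
Import GRing.Theory Num.Theory.
Local Open Scope ring_scope.

(* Pointwise linear-algebra model at a point w of Q, in coordinates adapted to Q:
   coordinates (x, y) with x in R^q (coordinates on Q) and y in R^m (Q = {y = 0}).
   Covectors and tangent vectors at w are column vectors of size q + m; a Poisson
   tensor P at w is the (q+m)x(q+m) matrix acting on covectors: alpha |-> P *m alpha. *)

Section Defs.
Variables (R : realFieldType) (q m : nat).
Local Notation n := (q + m)%N.

Definition skew_symmetric (P : 'M[R]_n) : Prop := P^T = - P.

Definition in_ker (P : 'M[R]_n) (a : 'cV[R]_n) : Prop := P *m a = 0.

Definition in_img (P : 'M[R]_n) (v : 'cV[R]_n) : Prop := exists a, v = P *m a.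

(* T_w S : tangent space of the symplectic leaf of P1 through w = image of (P1)_w *)
Definition in_TS (P1 : 'M[R]_n) (v : 'cV[R]_n) : Prop := in_img P1 v.

Definition in_D (P1 P2 : 'M[R]_n) (v : 'cV[R]_n) : Prop :=
  exists a, in_ker P1 a /\ v = P2 *m a.

Definition in_E (P1 P2 : 'M[R]_n) (v : 'cV[R]_n) : Prop :=
  in_D P1 P2 v /\ in_TS P1 v.

Definition in_TQ (v : 'cV[R]_n) : Prop := dsubmx v = 0.

Definition Q_transversal_to_E (P1 P2 : 'M[R]_n) : Prop :=
  (forall v, in_TQ v -> in_TS P1 v) /\
  (forall v, in_E P1 P2 v -> in_TS P1 v) /\
  (forall v, in_TQ v -> in_E P1 P2 v -> v = 0) /\
  (forall s, in_TS P1 s -> exists t e, in_TQ t /\ in_E P1 P2 e /\ s = t + e).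

Definition kernels_trivial_intersection (P1 P2 : 'M[R]_n) : Prop :=
  forall a, in_ker P1 a -> in_ker P2 a -> a = 0.

Definition pencil (P1 P2 : 'M[R]_n) (l : R) : 'M[R]_n := P2 - l *: P1.

(* P' : 'M_q is the matrix of the reduced pencil (P'_(lambda))_w for the pencil
   matrix Pl: every covector v = a in T*_w Q admits an extension
   hat v = col_mx a b in T*_w M with Pl hat v in T_w Q, and for every such
   extension Pl hat v = P' v (as a tangent vector to Q, i.e. x-components). *)
Definition reduced_pencil_matrix (Pl : 'M[R]_n) (P' : 'M[R]_q) : Prop :=
  forall a : 'cV[R]_q,
    (exists b : 'cV[R]_m, in_TQ (Pl *m col_mx a b)) /\
    (forall b : 'cV[R]_m, in_TQ (Pl *m col_mx a b) ->
        usubmx (Pl *m col_mx a b) = P' *m a).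

End Defs.

(* Main.v *)
Require Import Defs.
From HB Require Import structures.
From mathcomp Require Import all_boot all_order all_algebra.
Import GRing.Theory Num.Theory.
Local Open Scope ring_scope.

Lemma tr11 (R : realFieldType) (M : 'M[R]_1) : M^T = M.
Proof. by apply/matrixP => i j; rewrite !ord1 mxE. Qed.

Lemma skew_pair {R : realFieldType} {n} {P : 'M[R]_n} : P^T = - P ->
  forall x y : 'cV[R]_n, x^T *m (P *m y) = - (y^T *m (P *m x)).
Proof.
move=> hP x y.
rewrite -[y^T *m (P *m x)]tr11 !trmx_mul trmxK hP.
by rewrite mulmxN mulNmx opprK mulmxA.
Qed.

Lemma vec0 {R : realFieldType} {n} (v : 'cV[R]_n) :
  (forall g : 'cV[R]_n, g^T *m v = 0) -> v = 0.
Proof.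
move=> H; apply/matrixP => i j; rewrite ord1 [RHS]mxE.
have := H (delta_mx i 0); rewrite trmx_delta -rowE => /matrixP /(_ 0 0).
by rewrite !mxE.
Qed.

Lemma key {R : realFieldType} {q m : nat} {P1 P2 : 'M[R]_(q + m)}
  (hP1 : skew_symmetric P1) (hP2 : skew_symmetric P2)
  (htr : Q_transversal_to_E P1 P2)
  (hker : kernels_trivial_intersection P1 P2) (l : R) (b : 'cV[R]_m) :
  drsubmx (pencil P1 P2 l) *m b = 0 -> b = 0.
Proof.
move=> Hb.
set al := col_mx (0 : 'cV[R]_q) b.
have HQ : in_TQ (pencil P1 P2 l *m al).
  by rewrite /in_TQ -[pencil _ _ _]submxK mul_block_col col_mxKd mulmx0 add0r.
case: htr => [TQS [ES [QE0 Sdec]]].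
have annQ : forall v, in_TQ v -> al^T *m v = 0.
  move=> v hv; rewrite -[v]vsubmxK hv tr_col_mx mul_row_col trmx0 mul0mx.
  by rewrite mulmx0 addr0.
have P2al : exists g, P2 *m al = P1 *m g.
  case: (TQS _ HQ) => be hbe; exists (be + l *: al).
  by rewrite mulmxDr -hbe /pencil mulmxBl -scalemxAl -scalemxAr subrK.
have annE : forall e, in_E P1 P2 e -> al^T *m e = 0.
  move=> e [[k [hk ->]] _]; rewrite (skew_pair hP2).
  case: P2al => g ->; rewrite (skew_pair hP1).
  by rewrite /in_ker in hk; rewrite hk mulmx0 !oppr0.
have annS : forall g : 'cV[R]_(q + m), al^T *m (P1 *m g) = 0.
  move=> g; case: (Sdec (P1 *m g) (ex_intro _ g erefl)) => t [e [ht [he ->]]].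
  by rewrite mulmxDr annQ // annE // addr0.
have k1 : P1 *m al = 0.
  by apply: vec0 => g; rewrite (skew_pair hP1) annS oppr0.
have pe : pencil P1 P2 l *m al = P2 *m al.
  by rewrite /pencil mulmxBl -scalemxAl k1 scaler0 subr0.
have E2 : in_E P1 P2 (P2 *m al).
  split; first by exists al.
  by rewrite -pe; apply: TQS.
have z2 : P2 *m al = 0 by apply: QE0 => //; rewrite -pe.
have := hker al k1 z2 => /(congr1 dsubmx); rewrite col_mxKd => ->.
by apply/matrixP => i j; rewrite !mxE.
Qed.

Theorem proposition3p1 (R : realFieldType) (q m : nat) (P1 P2 : 'M[R]_(q + m))
  (hP1 : skew_symmetric P1) (hP2 : skew_symmetric P2)
  (htr : Q_transversal_to_E P1 P2)
  (hker : kernels_trivial_intersection P1 P2) :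
  forall l : R,
    let A := ulsubmx (pencil P1 P2 l) in
    let B := ursubmx (pencil P1 P2 l) in
    let C := dlsubmx (pencil P1 P2 l) in
    let D := drsubmx (pencil P1 P2 l) in
    (* (a) *)
    D \in unitmx /\
    (* (b) *)
    (forall P' : 'M[R]_q,
        reduced_pencil_matrix (pencil P1 P2 l) P' <-> P' = A - B *m invmx D *m C) /\
    (* (c) *)
    (forall P' : 'M[R]_q,
        reduced_pencil_matrix (pencil P1 P2 l) P' ->
        pencil P1 P2 l = block_mx P' B 0 D *m block_mx 1%:M 0 (invmx D *m C) 1%:M).
Proof.
move=> l A B C D.
have uD : D \in unitmx.
  rewrite -unitmx_tr -row_free_unit -kermx_eq0; apply/eqP/row_matrixP => i.
  have := mulmx_ker D^T => /row_matrixP /(_ i); rewrite row_mul row0.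
  move=> /(congr1 trmx); rewrite trmx_mul trmxK trmx0 => /(key hP1 hP2 htr hker).
  by move=> /(congr1 trmx); rewrite trmxK trmx0 => ->.
have Pl : pencil P1 P2 l = block_mx A B C D by rewrite submxK.
have mulE : forall (a : 'cV[R]_q) (b : 'cV[R]_m), pencil P1 P2 l *m col_mx a b
    = col_mx (A *m a + B *m b) (C *m a + D *m b).
  by move=> a b; rewrite Pl mul_block_col.
have TQiff : forall (a : 'cV[R]_q) (b : 'cV[R]_m), in_TQ (pencil P1 P2 l *m col_mx a b) <->
    b = - (invmx D *m C *m a).
  move=> a b; rewrite /in_TQ mulE col_mxKd; split.
    move=> /(congr1 (mulmx (invmx D))); rewrite mulmx0 mulmxDr !mulmxA.
    rewrite mulVmx // mul1mx => /eqP; rewrite addr_eq0 => /eqP ->.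
    by rewrite opprK.
  by move=> ->; rewrite mulmxN !mulmxA mulmxV // mul1mx subrr.
have redE : forall P', reduced_pencil_matrix (pencil P1 P2 l) P' <->
    (forall a : 'cV[R]_q, P' *m a = (A - B *m invmx D *m C) *m a).
  move=> P'; split.
    move=> H a; have [[b hb] H2] := H a; rewrite -(H2 b hb).
    move/TQiff: hb => ->; rewrite mulE col_mxKu mulmxN !mulmxA.
    by rewrite mulmxBl.
  move=> H a; split.
    by exists (- (invmx D *m C *m a)); apply/TQiff.
  move=> b /TQiff ->; rewrite mulE col_mxKu H mulmxN !mulmxA.
  by rewrite mulmxBl.
have redE2 : forall P', reduced_pencil_matrix (pencil P1 P2 l) P' <->
    P' = A - B *m invmx D *m C.
  move=> P'; split; last by move=> E; apply/redE => a; rewrite E.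
  move=> /redE H; apply/matrixP => i j.
  have := H (delta_mx j 0); rewrite -!colE => /matrixP /(_ i 0).
  by rewrite !mxE.
split=> //; split=> // P' /redE2 ->.
rewrite mulmx_block !mulmx1 !mulmx0 !add0r !mulmxA mulmxV // mul1mx subrK.
by rewrite Pl.
Qed.
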